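(* For $k\ge4$ and $d\in[(2^{k-1}-2)k\log2,\;2^{k-1}k\log2]$ if $k\ge5$, resp. $d\in[16.7,\;32\log2]$ if $k=4$, the equation $\Psi_d(x)=x$ has a unique solution in $[\frac12-\frac1{2^k},\frac12]$.
   Context: $\hat\Psi(x)=\frac{1-2x^{k-1}}{1-x^{k-1}}$, $\dot\Psi(v)=\frac{1-v^{d-1}}{2-v^{d-1}}$, $\Psi_d=\dot\Psi\circ\hat\Psi$ ($d$ real). *)

(* Defs.v *)
From Stdlib Require Import Reals.
Open Scope R_scope.

Definition PsiHat (k : nat) (x : R) : R :=
  (1 - 2 * x ^ (k - 1)) / (1 - x ^ (k - 1)).

(* \dot\Psi(v) = (1 - v^{d-1}) / (2 - v^{d-1}), real exponent d-1
   (v^{d-1} := Rpower v (d-1) = exp((d-1) ln v), meaningful for v > 0). *)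
Definition PsiDot (d : R) (v : R) : R :=
  (1 - Rpower v (d - 1)) / (2 - Rpower v (d - 1)).

Definition Psi (k : nat) (d : R) (x : R) : R := PsiDot d (PsiHat k x).

(* Main.v *)
Require Import Defs.
From Stdlib Require Import Reals Lra Lia ZArith Ranalysis5.
From Coquelicot Require Import Coquelicot.
Open Scope R_scope.


Lemma ln_div' x y : 0<x -> 0<y -> ln (x/y) = ln x - ln y.
Proof. intros. unfold Rdiv. rewrite ln_mult; [|lra|apply Rinv_0_lt_compat; lra]. rewrite ln_Rinv; lra. Qed.

Lemma ln_le_m1 x : 0 < x -> ln x <= x - 1.
Proof.
intros H. destruct (Req_dec x 1) as [->|H0]. rewrite ln_1; lra.
assert (H1 : 1 + ln x < exp (ln x)).
{ apply exp_ineq1. intro Hc. apply H0. rewrite <- (exp_ln x H). rewrite Hc. apply exp_0. }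
rewrite exp_ln in H1; lra.
Qed.

Lemma exp_pow_mul m x : exp x ^ m = exp (INR m * x).
Proof.
induction m. simpl. rewrite Rmult_0_l, exp_0; ring.
rewrite S_INR. simpl pow. rewrite IHm, <- exp_plus. f_equal. ring.
Qed.

Lemma bern m x : -1 <= x -> 1 + INR m * x <= (1+x)^m.
Proof.
intros Hx. induction m. simpl; lra.
rewrite S_INR; simpl pow.
assert (H := pos_INR m).
assert ((1+x)*(1 + INR m * x) <= (1+x)*(1+x)^m) by (apply Rmult_le_compat_l; lra).
nra.
Qed.

Lemma zcmp (p q r s : Z) (m j : nat) : (0<q)%Z -> (0<s)%Z ->
  (p ^ Z.of_nat m * s ^ Z.of_nat j <= r ^ Z.of_nat j * q ^ Z.of_nat m)%Z ->
  (IZR p / IZR q)^m <= (IZR r / IZR s)^j.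
Proof.
intros Hq Hs H.
unfold Rdiv. rewrite !Rpow_mult_distr, !pow_inv, !pow_IZR.
apply IZR_le in H. rewrite !mult_IZR in H.
assert (HB : 0 < IZR (q ^ Z.of_nat m)) by (apply IZR_lt; apply Z.pow_pos_nonneg; lia).
assert (HD : 0 < IZR (s ^ Z.of_nat j)) by (apply IZR_lt; apply Z.pow_pos_nonneg; lia).
set (A := IZR (p ^ Z.of_nat m)) in *. set (B := IZR (q ^ Z.of_nat m)) in *.
set (C := IZR (r ^ Z.of_nat j)) in *. set (D := IZR (s ^ Z.of_nat j)) in *.
replace (A * /B) with ((A*D) * /(B*D)) by (field; lra).
replace (C * /D) with ((C*B) * /(B*D)) by (field; lra).
apply Rmult_le_compat_r. left; apply Rinv_0_lt_compat; nra. lra.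
Qed.

Lemma ln2_le : ln 2 <= 7/10.
Proof.
rewrite <- (ln_exp (7/10)).
apply ln_le. lra.
replace (7/10) with (INR 64 * (7/640)) by (rewrite INR_IZR_INZ; simpl; lra).
rewrite <- exp_pow_mul.
apply Rle_trans with ((1 + 7/640)^64).
- replace 2 with ((IZR 2 / IZR 1)^1) by (simpl; lra).
  replace (1 + 7/640) with (IZR 647 / IZR 640) by lra.
  apply zcmp; [lia|lia|apply Zle_bool_imp_le; vm_compute; reflexivity].
- apply pow_incr. split. lra. left. apply exp_ineq1. lra.
Qed.

Lemma k4_num : (IZR 3410 / IZR 3753)^157 <= (IZR 2 / IZR 9)^10.
Proof. apply zcmp; [lia|lia|apply Zle_bool_imp_le; vm_compute; reflexivity]. Qed.

Lemma pow2_facts n : (3 <= n)%nat -> 8 <= 2^n /\ INR n <= 3/8 * 2^n /\ INR n * (INR n - 1) <= 3/4 * 2^n.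
Proof.
intros H. replace n with (3 + (n-3))%nat by lia. generalize (n-3)%nat as n0. clear.
induction n0.
- simpl. lra.
- replace (3 + S n0)%nat with (S (3 + n0)) by lia.
  rewrite S_INR. rewrite <- tech_pow_Rmult. destruct IHn0 as [A [B C]].
  assert (0 <= INR (3+n0)) by apply pos_INR.
  assert (3 <= INR (3+n0)) by (rewrite plus_INR; simpl; assert (0 <= INR n0) by apply pos_INR; lra).
  split; [lra| split; nra].
Qed.

Lemma pow2_facts5 n : (5 <= n)%nat -> 32 <= 2^n /\ (INR n + 1)*(INR n + 2) <= 42/32 * 2^n.
Proof.
intros H. replace n with (5 + (n-5))%nat by lia. generalize (n-5)%nat as n0. clear.
induction n0.
- simpl. lra.
- replace (5 + S n0)%nat with (S (5 + n0)) by lia.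
  rewrite S_INR. rewrite <- tech_pow_Rmult. destruct IHn0 as [A B].
  assert (5 <= INR (5+n0)) by (rewrite plus_INR; simpl; assert (0 <= INR n0) by apply pos_INR; lra).
  split; nra.
Qed.

Lemma e_facts n : (3 <= n)%nat -> 0 < /2^n <= 1/8.
Proof.
intros Hn. destruct (pow2_facts n Hn) as [H8 _].
split. apply Rinv_0_lt_compat; lra.
apply Rle_trans with (/8). apply Rinv_le_contravar; lra. lra.
Qed.

Lemma ln_Ce n : (3 <= n)%nat ->
  ln (((1 + /2^n)/2)/ /2^n) = ln (1 + /2^n) + (INR n - 1) * ln 2.
Proof.
intros Hn. destruct (e_facts n Hn) as [He1 He2].
assert (H2n : 0 < 2^n) by (apply pow_lt; lra).
replace (((1 + /2^n)/2)/ /2^n) with ((1 + /2^n) * (/2 * 2^n)) by (field; lra).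
assert (Hi2 : 0 < /2) by lra.
rewrite ln_mult; [|lra|apply Rmult_lt_0_compat; lra].
rewrite ln_mult; [|lra|lra].
rewrite ln_Rinv, ln_pow; lra.
Qed.

Lemma M_bounds n : (3 <= n)%nat ->
  1 <= ln (((1 + /2^n)/2)/ /2^n) <= /2^n + (INR n - 1) * ln 2.
Proof.
intros Hn. rewrite ln_Ce by exact Hn. destruct (e_facts n Hn) as [He1 He2].
assert (H1 : ln (1 + /2^n) <= /2^n) by (assert (H := ln_le_m1 (1 + /2^n)); lra).
assert (H0 : 0 <= ln (1 + /2^n)) by (rewrite <- ln_1; apply ln_le; lra).
assert (H3 : 3 <= INR n) by (replace 3 with (INR 3) by (simpl; lra); apply le_INR; lia).
assert (H4 := ln_lt_2).
split; nra.
Qed.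

Lemma sLr_bound n s : (3 <= n)%nat -> 0 < s <= /2^n ->
  s * ln (((1+s)/2)/s) <= /2^n * (/2^n + (INR n - 1) * ln 2).
Proof.
intros Hn Hs. destruct (e_facts n Hn) as [He1 He2].
destruct (M_bounds n Hn) as [M1 M2].
set (e := /2^n) in *.
set (M := ln (((1 + e)/2)/e)) in *.
assert (A1 : ln (((1+s)/2)/s) <= ln (((1+e)/2)/s)).
{ apply ln_le. apply Rdiv_lt_0_compat; lra.
  unfold Rdiv. apply Rmult_le_compat_r. left; apply Rinv_0_lt_compat; lra. lra. }
assert (A2 : ln (((1+e)/2)/s) = M + ln (e/s)).
{ unfold M. rewrite <- ln_mult. f_equal. field. lra.
  apply Rdiv_lt_0_compat; lra. apply Rdiv_lt_0_compat; lra. }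
assert (A3 : s * ln (e/s) <= e - s).
{ assert (H := ln_le_m1 (e/s) ltac:(apply Rdiv_lt_0_compat; lra)).
  apply Rmult_le_compat_l with (r := s) in H; [|lra].
  replace (s * (e/s - 1)) with (e - s) in H by (field; lra). exact H. }
assert (A4 : s * ln (((1+s)/2)/s) <= s * M + (e - s)).
{ apply Rle_trans with (s * ln (((1+e)/2)/s)). apply Rmult_le_compat_l; lra.
  rewrite A2. lra. }
nra.
Qed.

Definition Af t := ln (1 - 2*t) - ln (1 - t).
Definition Bf n t := ln (1 - 2*t^n) - ln (1 - t^n).
Definition phi n t := Af t / Bf n t.
Definition dphi n t := ((-2/(1-2*t) + 1/(1-t)) * Bf n t - Af t * (-2*(INR n * t^(pred n))/(1-2*t^n) + INR n * t^(pred n)/(1-t^n))) / (Bf n t)^2.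

Lemma phi_deriv n t : 0 < t -> 0 < 1 - 2*t -> 0 < 1 - 2 * t^n -> Bf n t <> 0 ->
  is_derive (phi n) t (dphi n t).
Proof.
intros H0 H1 H2 H3.
assert (0 < t^n) by (apply pow_lt; lra).
unfold phi, dphi, Af, Bf in *.
auto_derive.
- unfold Rminus in H3. repeat split; lra.
- unfold Rminus in *. set (p := t ^ Init.Nat.pred n) in *. set (q := t ^ n) in *. set (B := ln (1 + - (2 * q)) + - ln (1 + - q)) in *. field. repeat split; lra.
Qed.

Lemma tn_le n t : 0 <= t <= 1/2 -> t^n <= /2^n.
Proof.
intros H. rewrite <- pow_inv. replace (/2) with (1/2) by lra. apply pow_incr. lra.
Qed.

Lemma Bf_bound n t : 0 < t^n -> t^n <= 1/8 -> Bf n t <= - (t^n / (1 - t^n)).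
Proof.
intros H1 H2. unfold Bf. rewrite <- ln_div' by lra.
eapply Rle_trans. apply ln_le_m1. apply Rdiv_lt_0_compat; lra.
apply Req_le. field. lra.
Qed.

Lemma dphi_pos n t : (3 <= n)%nat -> (1 - /2^n)/2 <= t < 1/2 -> 0 < dphi n t.
Proof.
intros Hn Ht.
destruct (e_facts n Hn) as [He1 He2].
destruct (pow2_facts n Hn) as [_ [Hn1 Hn2]].
assert (HL := ln2_le). assert (HL2 := ln_lt_2).
set (e := /2^n) in *.
assert (Hne : INR n * e <= 3/8).
{ unfold e. apply Rmult_le_reg_r with (2^n). apply pow_lt; lra.
  rewrite Rmult_assoc, Rinv_l. lra. apply pow_nonzero; lra. }
assert (Hnne : INR n * (INR n - 1) * e <= 3/4).
{ unfold e. apply Rmult_le_reg_r with (2^n). apply pow_lt; lra.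
  rewrite Rmult_assoc, Rinv_l. lra. apply pow_nonzero; lra. }
assert (Hpn : n = S (pred n)) by lia.
set (u := t^n). set (p := t^(pred n)).
assert (Htp : t * p = u) by (unfold u, p; rewrite Hpn at 2; simpl; ring).
assert (Ht0 : 0 < t) by lra.
assert (Hp : 0 < p) by (apply pow_lt; lra).
assert (Hu : 0 < u) by (apply pow_lt; lra).
assert (Hue : u <= e) by (apply tn_le; lra).
set (s := 1 - 2*t).
assert (Hs : 0 < s <= e) by (unfold s; lra).
assert (HB := Bf_bound n t Hu ltac:(fold u; lra)). fold u in HB.
set (B := Bf n t) in *.
set (Lr := ln (((1+s)/2)/s)).
assert (HA : Af t = - Lr).
{ unfold Af, Lr. rewrite <- ln_div' by lra. rewrite <- ln_Rinv.
  f_equal. unfold s. field. lra. apply Rdiv_lt_0_compat; lra. }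
assert (HLr0 : 0 <= Lr).
{ unfold Lr. rewrite <- ln_1. apply ln_le. lra.
  apply Rmult_le_reg_r with s. lra. unfold Rdiv. rewrite Rmult_assoc, Rinv_l; lra. }
assert (HsL := sLr_bound n s Hn Hs). fold e Lr in HsL.
set (K := e * (e + (INR n - 1) * ln 2)) in *.
assert (Hnum : 0 < - B * (1-2*u)*(1-u) - Lr * INR n * p * s * (1 - t)).
{ assert (X1 : - B * (1-2*u)*(1-u) >= u * (1 - 2*u)).
  { assert (Y : - B >= u / (1-u)) by lra.
    assert (Y2 : 0 < (1-2*u)*(1-u)) by nra.
    replace (u * (1-2*u)) with (u/(1-u) * ((1-2*u)*(1-u))) by (field; lra).
    rewrite Rmult_assoc. apply Rle_ge. apply Rmult_le_compat_r; lra. }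
  assert (X2 : Lr * INR n * p * s * (1 - t) <= INR n * p * (1 - t) * K).
  { replace (Lr * INR n * p * s * (1 - t)) with ((s * Lr) * (INR n * p * (1 - t))) by ring.
    replace (INR n * p * (1 - t) * K) with (K * (INR n * p * (1 - t))) by ring.
    apply Rmult_le_compat_r. assert (0 <= INR n) by apply pos_INR. 
    apply Rmult_le_pos; [apply Rmult_le_pos|]; lra. lra. }
  assert (X3 : INR n * (1 - t) * K < t * (1 - 2*u)).
  { assert (Z1 : (1-e)*(1-2*e)/2 <= t * (1-2*u)) by nra.
    assert (Z2 : INR n * K <= 3/8 * e + 3/4 * (7/10)).
    { unfold K. replace (INR n * (e * (e + (INR n - 1) * ln 2))) with
       ((INR n * e) * e + (INR n * (INR n - 1) * e) * ln 2) by ring.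
      assert (0 <= INR n * e) by (apply Rmult_le_pos; [apply pos_INR|lra]).
      assert (0 <= INR n * (INR n - 1) * e).
      { apply Rmult_le_pos; [|lra]. assert (3 <= INR n) by (replace 3 with (INR 3) by (simpl; lra); apply le_INR; lia). nra. }
      nra. }
    assert (Z3 : 0 <= INR n * K).
    { unfold K. apply Rmult_le_pos. apply pos_INR. apply Rmult_le_pos. lra.
      assert (3 <= INR n) by (replace 3 with (INR 3) by (simpl; lra); apply le_INR; lia). nra. }
    assert (Z4 : 1 - t <= (1+e)/2) by lra.
    replace (INR n * (1 - t) * K) with ((1-t) * (INR n * K)) by ring.
    apply Rle_lt_trans with ((1+e)/2 * (3/8 * e + 3/4 * (7/10))).
    apply Rmult_le_compat; lra. nra. }
  assert (X4 : INR n * p * (1 - t) * K < p * (t * (1 - 2*u))).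
  { replace (INR n * p * (1 - t) * K) with (p * (INR n * (1 - t) * K)) by ring.
    apply Rmult_lt_compat_l; lra. }
  replace (u * (1 - 2*u)) with (p * (t * (1 - 2*u))) in X1 by (rewrite <- Htp; ring).
  lra. }
unfold dphi. fold B. rewrite HA. fold u p.
assert (HB0 : B < 0) by (assert (0 < u/(1-u)) by (apply Rdiv_lt_0_compat; lra); lra).
apply Rdiv_lt_0_compat; [|nra].
replace ((-2 / (1 - 2 * t) + 1 / (1 - t)) * B - - Lr * (-2 * (INR n * p) / (1 - 2 * u) + INR n * p / (1 - u)))
  with ((- B * (1-2*u)*(1-u) - Lr * INR n * p * s * (1 - t)) / (s * (1-t) * (1-2*u) * (1-u))).
apply Rdiv_lt_0_compat. lra.
repeat apply Rmult_lt_0_compat; nra.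
unfold s. field. repeat split; nra.
Qed.

Lemma Bf_neg n t : (3 <= n)%nat -> 0 < t <= 1/2 -> Bf n t < 0 /\ 0 < t^n <= 1/8.
Proof.
intros Hn Ht. destruct (e_facts n Hn) as [He1 He2].
assert (Hu : 0 < t^n) by (apply pow_lt; lra).
assert (Hue : t^n <= /2^n) by (apply tn_le; lra).
assert (HB := Bf_bound n t Hu ltac:(lra)).
assert (0 < t^n/(1-t^n)) by (apply Rdiv_lt_0_compat; lra).
split; lra.
Qed.

Lemma phi_mono n x y : (3 <= n)%nat -> (1 - /2^n)/2 <= x -> x < y -> y < 1/2 -> phi n x < phi n y.
Proof.
intros Hn Hx Hxy Hy.
destruct (e_facts n Hn) as [He1 He2].
destruct (MVT_cor2 (phi n) (dphi n) x y Hxy) as [c [Hc1 Hc2]].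
- intros c Hc. apply is_derive_Reals.
  destruct (Bf_neg n c Hn ltac:(lra)) as [HB Hu].
  apply phi_deriv; lra.
- assert (0 < dphi n c) by (apply dphi_pos; [exact Hn|lra]). assert (0 < dphi n c * (y-x)) by (apply Rmult_lt_0_compat; lra). lra.
Qed.

Lemma fp_char n d x : (3 <= n)%nat -> 1 < d -> (1 - /2^n)/2 <= x <= 1/2 ->
  Psi (S n) d x = x -> x < 1/2 /\ phi n x = d - 1.
Proof.
intros Hn Hd Hx H.
destruct (e_facts n Hn) as [He1 He2].
destruct (Bf_neg n x Hn ltac:(lra)) as [HB Hu].
unfold Psi, PsiDot, PsiHat in H. replace (S n - 1)%nat with n in H by lia.
unfold Rpower in H.
rewrite ln_div' in H by lra. fold (Bf n x) in H.
set (w := exp ((d - 1) * Bf n x)) in *.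
assert (Hw0 : 0 < w) by apply exp_pos.
assert (Hw1 : w < 1).
{ rewrite <- exp_0. unfold w. apply exp_increasing. assert (0 < (d-1) * (- Bf n x)) by (apply Rmult_lt_0_compat; lra). lra. }
assert (E : 1 - w = x * (2 - w)) by (rewrite <- H; field; lra).
assert (Hx2 : x < 1/2).
{ destruct (Rlt_or_le x (1/2)) as [h|h]; [exact h|]. assert (Ex : x = 1/2) by lra. rewrite Ex in E. lra. }
split; [exact Hx2|].
assert (Ew : w = (1 - 2*x)/(1-x)) by (apply Rmult_eq_reg_r with (1-x); [|lra]; unfold Rdiv; rewrite Rmult_assoc, Rinv_l; nra).
assert (EA : Af x = (d-1) * Bf n x).
{ unfold Af. rewrite <- ln_div' by lra. rewrite <- Ew. unfold w. apply ln_exp. }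
unfold phi. rewrite EA. field. lra.
Qed.

Lemma exist_fp n d : (3 <= n)%nat -> 1 < d ->
  (d-1) * Bf n ((1 - /2^n)/2) <= Af ((1 - /2^n)/2) ->
  exists x, (1 - /2^n)/2 <= x <= 1/2 /\ Psi (S n) d x = x.
Proof.
intros Hn Hd Hb.
destruct (e_facts n Hn) as [He1 He2].
set (a := (1 - /2^n)/2) in *.
set (G := fun t => exp ((d-1) * Bf n t) - (1 - 2*t)/(1-t)).
assert (Hfix : forall z, a <= z <= 1/2 -> G z = 0 -> Psi (S n) d z = z).
{ intros z Hz Gz. unfold G in Gz.
  destruct (Bf_neg n z Hn ltac:(unfold a in *; lra)) as [HB Hu].
  unfold Psi, PsiDot, PsiHat. replace (S n - 1)%nat with n by lia.
  unfold Rpower. rewrite ln_div' by lra. fold (Bf n z).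
  replace (exp ((d - 1) * Bf n z)) with ((1 - 2*z)/(1-z)) by lra.
  field. split; lra. }
assert (Ga : G a <= 0).
{ unfold G. unfold Af in Hb. 
  destruct (Bf_neg n a Hn ltac:(unfold a in *; lra)) as [HB Hu].
  rewrite <- ln_div' in Hb by (unfold a; lra).
  rewrite <- (exp_ln ((1 - 2*a)/(1-a))) by (apply Rdiv_lt_0_compat; unfold a; lra).
  destruct Hb as [Hb|Hb]. apply exp_increasing in Hb. lra. rewrite Hb. lra. }
assert (Gb : 0 < G (1/2)).
{ unfold G. replace ((1 - 2 * (1/2)) / (1 - 1/2)) with 0 by field. assert (H := exp_pos ((d - 1) * Bf n (1/2))). lra. }
destruct Ga as [Ga|Ga].
- assert (Hc : forall t, a <= t <= 1/2 -> continuity_pt G t).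
  { intros t Ht. apply derivable_continuous_pt. apply ex_derive_Reals_0.
    destruct (Bf_neg n t Hn ltac:(unfold a in *; lra)) as [HB Hu].
    unfold G, Bf. auto_derive. repeat split; lra. }
  destruct (IVT_interv G a (1/2) Hc ltac:(unfold a; lra) Ga Gb) as [z [Hz Gz]].
  exists z. split. exact Hz. apply Hfix; assumption.
- exists a. split. unfold a; lra. apply Hfix. unfold a; lra. exact Ga.
Qed.

Lemma bound_gen n d : (4 <= n)%nat -> (2^n - 2) * (INR n + 1) * ln 2 <= d ->
  (d-1) * Bf n ((1 - /2^n)/2) <= Af ((1 - /2^n)/2).
Proof.
intros Hn Hd. assert (Hn3 : (3 <= n)%nat) by lia.
destruct (e_facts n Hn3) as [He1 He2].
destruct (pow2_facts n Hn3) as [H8 [Hn1 Hn2]].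
destruct (M_bounds n Hn3) as [M1 M2].
assert (HL := ln2_le). assert (HL2 := ln_lt_2).
assert (H2n : 2^n * /2^n = 1) by (apply Rinv_r; apply pow_nonzero; lra).
set (e := /2^n) in *. set (P := 2^n) in *. set (a := (1 - e)/2).
assert (Hn4 : 4 <= INR n) by (replace 4 with (INR 4) by (simpl; lra); apply le_INR; lia).
assert (Hne : INR n * e <= 3/8).
{ apply Rmult_le_reg_r with P. lra. replace (INR n * e * P) with (INR n * (P*e)) by ring. rewrite H2n. lra. }
assert (HA : Af a = - ln (((1 + e)/2)/e)).
{ unfold Af, a. rewrite <- ln_div' by lra. rewrite <- ln_Rinv.
  f_equal. field. lra. apply Rdiv_lt_0_compat; lra. }
assert (Hua : e * (1 - INR n * e) <= a^n).
{ unfold a. unfold Rdiv. rewrite Rpow_mult_distr.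
  replace ((/2)^n) with e by (unfold e; rewrite pow_inv; reflexivity).
  assert (Hb := bern n (-e) ltac:(lra)).
  replace (1 + - e) with (1 - e) in Hb by ring. nra. }
assert (Hua2 : a^n <= 1/8) by (apply Rle_trans with e; [apply tn_le; unfold a; lra| lra]).
assert (HB := Bf_bound n a ltac:(nra) Hua2).
assert (HB2 : Bf n a <= - (e * (1 - INR n * e))).
{ assert (a^n <= a^n/(1-a^n)).
  { apply Rmult_le_reg_r with (1 - a^n). lra. unfold Rdiv. rewrite Rmult_assoc, Rinv_l; nra. }
  lra. }
assert (HD : (INR n + 1) * ln 2 * (1 - 2*e) - e <= (d-1) * e).
{ apply Rle_trans with (((P-2)*(INR n + 1)*ln 2 - 1) * e).
  - apply Req_le. replace (((P-2)*(INR n + 1)*ln 2 - 1) * e) with ((P*e)*(INR n + 1)*ln 2 - 2*e*(INR n + 1)*ln 2 - e) by ring.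
    rewrite H2n. ring.
  - apply Rmult_le_compat_r; lra. }
assert (Hkey : e + (INR n - 1) * ln 2 <= ((INR n + 1) * ln 2 * (1 - 2*e) - e) * (1 - INR n * e)).
{ destruct (le_lt_eq_dec 4 n Hn) as [H5|H4].
  - destruct (pow2_facts5 n ltac:(lia)) as [H32 Hq]. fold P in H32, Hq.
    assert (Hq' : (INR n + 1) * (INR n + 2) * e <= 42/32).
    { apply Rmult_le_reg_r with P. lra. replace ((INR n + 1) * (INR n + 2) * e * P) with ((INR n + 1) * (INR n + 2) * (P*e)) by ring. rewrite H2n. lra. }
    assert (He32 : e <= 1/32).
    { apply Rmult_le_reg_r with P. lra. rewrite Rmult_comm, H2n. lra. }
    assert (X : ((INR n + 1) * ln 2 * (1 - 2*e) - e) * (1 - INR n * e) >=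
       (INR n + 1) * ln 2 - ((INR n + 1) * (INR n + 2) * e) * ln 2 - e).
    { assert (0 <= INR n * e) by (apply Rmult_le_pos; lra).
      assert (0 <= e * e * INR n * (INR n + 1) * ln 2).
      { repeat apply Rmult_le_pos; lra. }
      nra. }
    nra.
  - subst n. replace e with (1/16) in * by (unfold e, P; simpl; lra).
    replace (INR 4) with 4 by (simpl; lra). nra. }
assert (HDn : 0 <= d - 1).
{ assert (0 <= (P-2)*(INR n + 1)*ln 2 - 1).
  { assert (6 <= P - 2) by lra. assert (5 <= INR n + 1) by lra.
    assert (30 <= (P-2)*(INR n + 1)) by nra. nra. }
  lra. }
rewrite HA.
assert (Y : (d - 1) * Bf n a <= - ((d-1) * e * (1 - INR n * e))).
{ replace (- ((d-1) * e * (1 - INR n * e))) with ((d-1) * (- (e * (1 - INR n * e)))) by ring.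
  apply Rmult_le_compat_l; lra. }
assert (Z : ((INR n + 1) * ln 2 * (1 - 2*e) - e) * (1 - INR n * e) <= (d-1) * e * (1 - INR n * e)).
{ apply Rmult_le_compat_r; lra. }
lra.
Qed.

Lemma bound_4 d : 167/10 <= d -> (d-1) * Bf 3 ((1 - /2^3)/2) <= Af ((1 - /2^3)/2).
Proof.
intros Hd.
replace ((1 - /2^3)/2) with (7/16) by (simpl; field).
assert (EB : Bf 3 (7/16) = ln (IZR 3410 / IZR 3753)).
{ unfold Bf. rewrite <- ln_div' by (simpl; lra). f_equal. simpl. field. }
assert (EA : Af (7/16) = ln (IZR 2 / IZR 9)).
{ unfold Af. rewrite <- ln_div' by lra. f_equal. field. }
rewrite EA, EB.
set (q := IZR 3410 / IZR 3753).
assert (Hq : 0 < q < 1) by (unfold q; split; lra).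
assert (Hlq : ln q < 0) by (rewrite <- ln_1; apply ln_increasing; lra).
assert (K := k4_num). fold q in K.
assert (Hq157 : 0 < q^157) by (apply pow_lt; lra).
apply ln_le in K; [|exact Hq157].
rewrite !ln_pow in K by (try lra).
rewrite !INR_IZR_INZ in K. simpl in K.
assert (0 <= (d - 1 - 157/10) * (- ln q)) by (apply Rmult_le_pos; lra).
lra.
Qed.

Theorem lemma3p1 (k : nat) (d : R) :
  (4 <= k)%nat ->
  (if (5 <=? k)%nat
   then (2 ^ (k - 1) - 2) * INR k * ln 2 <= d <= 2 ^ (k - 1) * INR k * ln 2
   else 16.7 <= d <= 32 * ln 2) ->
  exists! x : R, (1 / 2 - 1 / 2 ^ k <= x <= 1 / 2) /\ Psi k d x = x.
Proof.
intros Hk Hd.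
destruct k as [|n]; [lia|]. assert (Hn : (3 <= n)%nat) by lia.
replace (1/2 - 1/2^(S n)) with ((1 - /2^n)/2) by (simpl; field; apply pow_nonzero; lra).
assert (Hb : 1 < d /\ (d-1) * Bf n ((1 - /2^n)/2) <= Af ((1 - /2^n)/2)).
{ destruct (5 <=? S n)%nat eqn:E.
  - apply Nat.leb_le in E. replace (S n - 1)%nat with n in Hd by lia. rewrite S_INR in Hd.
    split.
    + destruct (pow2_facts n Hn) as [H8 _].
      assert (H16 : 16 <= 2^n).
      { replace n with (S (n-1)) by lia. rewrite <- tech_pow_Rmult.
        destruct (pow2_facts (n-1) ltac:(lia)) as [H8' _]. lra. }
      assert (Hn4 : 4 <= INR n) by (replace 4 with (INR 4) by (simpl; lra); apply le_INR; lia).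
      assert (HL2 := ln_lt_2).
      assert (70 <= (2^n - 2) * (INR n + 1) * 2) by nra.
      assert (0 <= (2^n - 2) * (INR n + 1) * (ln 2 - /2)) by (apply Rmult_le_pos; nra).
      nra.
    + apply bound_gen. lia. lra.
  - apply Nat.leb_gt in E. assert (n = 3%nat) by lia. subst n.
    assert (E2 : 16.7 = 167/10) by (unfold Q2R; simpl; lra).
    rewrite E2 in Hd. split. lra. apply bound_4. lra. }
destruct Hb as [Hd1 Hb].
destruct (exist_fp n d Hn Hd1 Hb) as [x [Hx Px]].
exists x. split. split; assumption.
intros y [Hy Py].
destruct (fp_char n d x Hn Hd1 Hx Px) as [Hx2 Phx].
destruct (fp_char n d y Hn Hd1 Hy Py) as [Hy2 Phy].
destruct (Rtotal_order x y) as [h|[h|h]]; auto; exfalso.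
- assert (phi n x < phi n y) by (apply phi_mono; [exact Hn|lra|lra|lra]). lra.
- assert (phi n y < phi n x) by (apply phi_mono; [exact Hn|lra|lra|lra]). lra.
Qed.
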